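(* Let $Q$ be a finitely generated $\Lambda_R$-module and let $\mathfrak p=(g)$ be a principal prime ideal of $\Lambda_R$. Assume that $Q/\mathfrak p Q$ is a pseudo-null $\Lambda_R$-module. Let $S$ be the maximal pseudo-null $\Lambda_R$-submodule of $Q$. Then the $\mathfrak p$-torsion submodule $Q[\mathfrak p]$ of $Q$ coincides with (in particular is isomorphic to) $S[\mathfrak p]$.
   Context: Fix a prime $p$. $R$ is a complete noetherian regular local ring with maximal ideal $\mathfrak m_R$, of Krull dimension $d\ge 1$, with finite residue field of characteristic $p$. $G_\infty\simeq\mathbb Z_p$ is a pro-$p$ group with topological generator $\gamma$, $G_n=G_\infty/G_\infty^{p^n}\simeq \mathbb Z/p^n\mathbb Z$, and $\Lambda_R=R[[G_\infty]]=\varprojlim_n R[G_n]$ (isomorphic to $R[[X]]$ via $\gamma\mapsto 1+X$; it is a complete noetherian regular local ring, hence a UFD). A finitely generated $\Lambda_R$-module is pseudo-null if every prime ideal in its support has height at least $2$. For an ideal $I$ and a module $M$, $M[I]$ denotes the submodule of elements killed by $I$. *)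

(* Defs.v *)
From HB Require Import structures.
From mathcomp Require Import all_boot all_order all_algebra.
From mathcomp Require Import boolp.

Set Implicit Arguments.
Unset Strict Implicit.
Unset Printing Implicit Defensive.

Import Order.TTheory GRing.Theory.
Local Open Scope ring_scope.

(* Lambda_R = R[[G_oo]] is identified with R[[X]] via gamma |-> 1 + X.       *)
Section PowerSeries.
Variable R : comNzRingType.

Variant pser : Type := PSer of nat -> R.

Definition pscoef (f : pser) : nat -> R := let: PSer c := f in c.

Lemma pserP (f g : pser) : (forall n, pscoef f n = pscoef g n) -> f = g.
Proof.
case: f g => [f] [g] /= H; congr PSer; exact: funext.
Qed.

HB.instance Definition _ := gen_eqMixin pser.
HB.instance Definition _ := gen_choiceMixin pser.

Definition ps_zero : pser := PSer (fun _ => 0).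
Definition ps_add (f g : pser) : pser := PSer (fun n => pscoef f n + pscoef g n).
Definition ps_opp (f : pser) : pser := PSer (fun n => - pscoef f n).

Lemma ps_addA : associative ps_add.
Proof. by move=> f g h; apply: pserP => n /=; rewrite addrA. Qed.
Lemma ps_addC : commutative ps_add.
Proof. by move=> f g; apply: pserP => n /=; rewrite addrC. Qed.
Lemma ps_add0 : left_id ps_zero ps_add.
Proof. by move=> f; apply: pserP => n /=; rewrite add0r. Qed.
Lemma ps_addN : left_inverse ps_zero ps_opp ps_add.
Proof. by move=> f; apply: pserP => n /=; rewrite addNr. Qed.

HB.instance Definition _ :=
  GRing.isZmodule.Build pser ps_addA ps_addC ps_add0 ps_addN.

Definition ps_trunc (n : nat) (f : pser) : {poly R} := \poly_(i < n.+1) pscoef f i.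

Definition ps_mul (f g : pser) : pser :=
  PSer (fun n => (ps_trunc n f * ps_trunc n g)`_n).
Definition ps_one : pser := PSer (fun n => (n == 0)%:R).
(* the variable X (corresponds to gamma - 1) *)
Definition ps_X : pser := PSer (fun n => (n == 1)%:R).

Lemma coefM_take (p q : {poly R}) n :
  (p * q)`_n = (take_poly n.+1 p * take_poly n.+1 q)`_n.
Proof.
rewrite !coefM; apply: eq_bigr => j _.
by rewrite !coef_take_poly ltn_ord ltnS leq_subr.
Qed.

Lemma take_trunc i n f : (i <= n)%N ->
  take_poly i.+1 (ps_trunc n f) = ps_trunc i f.
Proof.
move=> le_in; apply/polyP => k; rewrite coef_take_poly !coef_poly.
case: ifP => // lt_ki; suff -> : (k < n.+1)%N by [].
by apply: leq_trans lt_ki _; rewrite ltnS.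
Qed.

Lemma trunc_mul n f g :
  ps_trunc n (ps_mul f g) = take_poly n.+1 (ps_trunc n f * ps_trunc n g).
Proof.
apply/polyP => i; rewrite coef_take_poly coef_poly /=.
case: ifP => // lt_in.
by rewrite [RHS]coefM_take !take_trunc.
Qed.

Lemma take_take m (p : {poly R}) : take_poly m (take_poly m p) = take_poly m p.
Proof. by rewrite take_poly_id // size_take_poly. Qed.

Lemma coefM_takel (p q : {poly R}) n :
  (take_poly n.+1 p * q)`_n = (p * q)`_n.
Proof. by rewrite [LHS]coefM_take take_take -coefM_take. Qed.

Lemma coefM_taker (p q : {poly R}) n :
  (p * take_poly n.+1 q)`_n = (p * q)`_n.
Proof. by rewrite [LHS]coefM_take take_take -coefM_take. Qed.

Lemma ps_mulA : associative ps_mul.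
Proof.
move=> f g h; apply: pserP => n /=.
by rewrite !trunc_mul coefM_takel coefM_taker mulrA.
Qed.

Lemma ps_mulC : commutative ps_mul.
Proof. by move=> f g; apply: pserP => n /=; rewrite mulrC. Qed.

Lemma trunc_one n : ps_trunc n ps_one = 1.
Proof.
apply/polyP => i; rewrite coef_poly coef1 /=.
case: ifP => // /negbT; rewrite -leqNgt => lt_ni.
by case: i lt_ni.
Qed.

Lemma ps_mul1 : left_id ps_one ps_mul.
Proof.
move=> f; apply: pserP => n /=.
by rewrite trunc_one mul1r coef_poly ltnSn.
Qed.

Lemma trunc_add n f g : ps_trunc n (ps_add f g) = ps_trunc n f + ps_trunc n g.
Proof.
apply/polyP => i; rewrite coefD !coef_poly /=.
by case: ifP => //; rewrite addr0.
Qed.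

Lemma ps_mulDl : left_distributive ps_mul ps_add.
Proof.
move=> f g h; apply: pserP => n /=.
by rewrite trunc_add mulrDl coefD.
Qed.

Lemma ps_one_neq0 : ps_one != ps_zero.
Proof.
apply/eqP => /(congr1 (fun f => pscoef f 0)) /=.
by move/eqP; rewrite oner_eq0.
Qed.

HB.instance Definition _ :=
  GRing.Zmodule_isComNzRing.Build pser ps_mulA ps_mulC ps_mul1 ps_mulDl
    ps_one_neq0.

End PowerSeries.

Notation Lambda R := (pser R).

Section CommAlg.
Variable A : comNzRingType.

Definition is_ideal (I : A -> Prop) : Prop :=
  [/\ I 0, (forall x y, I x -> I y -> I (x + y)) & (forall a x, I x -> I (a * x))].

Definition prime_ideal (I : A -> Prop) : Prop :=
  [/\ is_ideal I, ~ I 1 & (forall a b, I (a * b) -> I a \/ I b)].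

Definition maximal_ideal (I : A -> Prop) : Prop :=
  [/\ is_ideal I, ~ I 1 &
      (forall J, is_ideal J -> (forall x, I x -> J x) -> ~ J 1 ->
         forall x, J x -> I x)].

Definition ideal_gen (s : seq A) (x : A) : Prop :=
  exists c : 'I_(size s) -> A, x = \sum_(i < size s) c i * s`_i.

Definition principal_ideal (g : A) (x : A) : Prop := exists a, x = a * g.

Definition noetherian_ring : Prop :=
  forall I, is_ideal I -> exists s : seq A, forall x, I x <-> ideal_gen s x.

Definition local_ring (m : A -> Prop) : Prop :=
  maximal_ideal m /\ (forall J, maximal_ideal J -> forall x, J x <-> m x).

Definition strict_sub (I J : A -> Prop) : Prop :=
  (forall x, I x -> J x) /\ exists x, J x /\ ~ I x.

Definition height_ge (P : A -> Prop) (n : nat) : Prop :=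
  exists c : nat -> (A -> Prop),
    [/\ forall i, (i <= n)%N -> prime_ideal (c i),
        forall i, (i < n)%N -> strict_sub (c i) (c i.+1) &
        forall x, c n x <-> P x].

Definition krull_dim (d : nat) : Prop :=
  (exists P, prime_ideal P /\ height_ge P d) /\
  ~ (exists P, prime_ideal P /\ height_ge P d.+1).

Definition regular_local_ring (m : A -> Prop) (d : nat) : Prop :=
  [/\ noetherian_ring, local_ring m, krull_dim d &
      exists s : seq A, size s = d /\ forall x, m x <-> ideal_gen s x].

Fixpoint ideal_pow (I : A -> Prop) (n : nat) : A -> Prop :=
  match n with
  | 0 => fun _ => True
  | n'.+1 => fun x => exists k (a b : 'I_k -> A),
       [/\ forall i, I (a i), forall i, ideal_pow I n' (b i) &
           x = \sum_(i < k) a i * b i]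
  end.

Definition adically_complete (m : A -> Prop) : Prop :=
  (forall x : nat -> A, (forall n, ideal_pow m n (x n.+1 - x n)) ->
     exists y, forall n, ideal_pow m n (y - x n)) /\
  (forall y, (forall n, ideal_pow m n y) -> y = 0).

Definition finite_residue_field_char (m : A -> Prop) (p : nat) : Prop :=
  (exists s : seq A, forall x, exists2 y, y \in s & m (x - y)) /\ m p%:R.

End CommAlg.

Section Modules.
Variables (A : comNzRingType) (M : lmodType A).

Definition submodule (N : M -> Prop) : Prop :=
  [/\ N 0, (forall x y, N x -> N y -> N (x + y)) & (forall a x, N x -> N (a *: x))].

Definition whole : M -> Prop := fun _ => True.
Definition zero_sub : M -> Prop := fun x => x = 0.

Definition subquot_fg (N N' : M -> Prop) : Prop :=
  exists s : seq M, (forall i, N s`_i) /\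
    forall x, N x -> exists c : 'I_(size s) -> A,
      N' (x - \sum_(i < size s) c i *: s`_i).

(* q is in the support of the subquotient N/N', i.e. (N/N')_q <> 0 *)
Definition in_support (N N' : M -> Prop) (q : A -> Prop) : Prop :=
  exists x, N x /\ forall s, ~ q s -> ~ N' (s *: x).

Definition pseudo_null_subquot (N N' : M -> Prop) : Prop :=
  subquot_fg N N' /\
  forall q, prime_ideal q -> in_support N N' q -> height_ge q 2.

Definition pseudo_null (N : M -> Prop) : Prop := pseudo_null_subquot N zero_sub.

Definition ideal_mod (I : A -> Prop) (N : M -> Prop) (x : M) : Prop :=
  exists k (a : 'I_k -> A) (y : 'I_k -> M),
    [/\ forall i, I (a i), forall i, N (y i) & x = \sum_(i < k) a i *: y i].

Definition torsion_sub (I : A -> Prop) (N : M -> Prop) (x : M) : Prop :=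
  N x /\ forall a, I a -> a *: x = 0.

Definition max_pseudo_null (N : M -> Prop) : Prop :=
  [/\ submodule N, pseudo_null N &
      forall T, submodule T -> pseudo_null T -> forall x, T x -> N x].

End Modules.

(* Main.v *)
Require Import Defs.
From HB Require Import structures.
From mathcomp Require Import all_boot all_order all_algebra.
From mathcomp Require Import boolp.
Import GRing.Theory.
Local Open Scope ring_scope.
Set Implicit Arguments.
Unset Strict Implicit.

Lemma prime_pow (A : comNzRingType) (q : A -> Prop) t n :
  prime_ideal q -> ~ q t -> ~ q (t ^+ n).
Proof.
case=> _ q1 qp nt; elim: n => [|n IH]; first by rewrite expr0.
by rewrite exprS => /qp [].
Qed.

Lemma det_cong (A : comNzRingType) (q : A -> Prop) (g t : A) n (C : 'M[A]_n) :
  prime_ideal q -> q g -> ~ q t ->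
  ~ q (\det (\matrix_(i, j) ((i == j)%:R * t - g * C i j))).
Proof.
move=> qP qg nqt.
pose P : 'M[{poly A}]_n :=
  \matrix_(i, j) (((i == j)%:R * t)%:P - 'X * (C i j)%:P).
have Eg : \matrix_(i, j) ((i == j)%:R * t - g * C i j) = map_mx (horner_eval g) P.
  by apply/matrixP => i j; rewrite !mxE ?horner_evalE !hornerE.
have E0 : (t%:M : 'M[A]_n) = map_mx (horner_eval 0) P.
  apply/matrixP => i j; rewrite !mxE ?horner_evalE !hornerE.
  by case: (i == j); rewrite /= ?mulr1n ?mulr0n ?mul1r ?mul0r ?mulr0 ?subr0.
have Dt : (\det P)`_0 = t ^+ n.
  by rewrite -horner_coef0 -[_.[0]]/(horner_eval 0 _) -det_map_mx -E0 det_scalar.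
rewrite Eg det_map_mx ?horner_evalE => qD.
apply: (@prime_pow _ q t n qP nqt); rewrite -Dt.
set D := \det P.
have HD : D.[g] = D`_0 + (drop_poly 1 D).[g] * g.
  rewrite -{1}(poly_take_drop 1 D) hornerD hornerM hornerXn expr1.
  rewrite [take_poly 1 D]size1_polyC ?size_take_poly // hornerC coef_take_poly //.
have -> : D`_0 = D.[g] + (- (drop_poly 1 D).[g]) * g by rewrite HD mulNr addrK.
case: qP => [[_ qadd qmul] _ _].
by apply: qadd => //; apply: qmul.
Qed.

Lemma idmod_mul (A : comNzRingType) (Q : lmodType A) (g : A) v :
  ideal_mod (principal_ideal g) (@whole _ Q) v -> exists w, v = g *: w.
Proof.
case=> k [a] [y] [Ha _ ->].
have [b Hb] : exists b : 'I_k -> A, forall i, a i = b i * g.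
  by have [b Hb] := @choice _ _ (fun i (c : A) => a i = c * g) Ha; exists b.
exists (\sum_(i < k) b i *: y i); rewrite scaler_sumr; apply: eq_bigr => i _.
by rewrite Hb scalerA mulrC.
Qed.

Definition mv (A : comNzRingType) (Q : lmodType A) n (M : 'M[A]_n) (e : 'I_n -> Q) :=
  fun i => \sum_(j < n) M i j *: e j.

Lemma mv_mul (A : comNzRingType) (Q : lmodType A) n (M N : 'M[A]_n) (e : 'I_n -> Q) i :
  mv (M *m N) e i = mv M (mv N e) i.
Proof.
rewrite /mv; under eq_bigr do rewrite mxE scaler_suml.
rewrite exchange_big /=; apply: eq_bigr => j _.
by rewrite scaler_sumr; apply: eq_bigr => k _; rewrite scalerA.
Qed.

Lemma sum_delta (A : comNzRingType) (Q : lmodType A) n (e : 'I_n -> Q) i :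
  \sum_(j < n) (i == j)%:R *: e j = e i.
Proof.
rewrite (bigD1 i) //= eqxx scale1r big1 ?addr0 // => j /negbTE.
by rewrite eq_sym => ->; rewrite scale0r.
Qed.

Lemma nak (A : comNzRingType) (Q : lmodType A) (q : A -> Prop) (g : A) (y : Q) :
  subquot_fg (@whole _ Q) (@zero_sub _ Q) -> prime_ideal q -> q g ->
  (forall s, ~ q s -> s *: y <> 0) ->
  in_support (@whole _ Q) (ideal_mod (principal_ideal g) (@whole _ Q)) q.
Proof.
move=> [es [_ Hgen]] qP qg Hy.
apply: contrapT => Hns.
have Hs : forall z : Q, exists s, ~ q s /\ exists w, s *: z = g *: w.
  move=> z; apply: contrapT => Hz; apply: Hns; exists z; split=> // s nqs Hm.
  apply: Hz; exists s; split=> //; exact: idmod_mul.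
set n := size es.
pose e (i : 'I_n) := es`_i.
have [sf Hsf] := @choice _ _ (fun (i : 'I_n) s => ~ q s /\ exists w, s *: e i = g *: w)
  (fun i => Hs (e i)).
pose t := \prod_(i < n) sf i.
have nqt : ~ q t.
  case: (qP) => _ q1 qp.
  apply: (big_ind (fun x => ~ q x)) => //; first by move=> a b na nb /qp [].
  by move=> i _; case: (Hsf i).
have Hu : forall i, exists c : 'I_n -> A, t *: e i = g *: \sum_(j < n) c j *: e j.
  move=> i; case: (Hsf i) => _ [w Hw].
  have [c Hc] := Hgen w I.
  exists (fun j => (\prod_(k < n | k != i) sf k) * c j).
  rewrite /t (bigD1 i) //= mulrC -scalerA Hw scalerA mulrC -scalerA.
  congr (_ *: _); move: Hc; rewrite /zero_sub => /eqP; rewrite subr_eq0 => /eqP ->.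
  rewrite scaler_sumr; apply: eq_bigr => j _; by rewrite scalerA.
have [C HC] := @choice _ _ (fun (i : 'I_n) (c : 'I_n -> A) =>
   t *: e i = g *: \sum_(j < n) c j *: e j) Hu.
pose M := \matrix_(i, j) ((i == j)%:R * t - g * C i j).
have HM : forall i, mv M e i = 0.
  move=> i; rewrite /mv.
  under eq_bigr do rewrite mxE scalerBl -scalerA -scalerA.
  rewrite sumrB sum_delta HC scaler_sumr subrr //.
have Hdet : forall i, \det M *: e i = 0.
  move=> i; have := mv_mul (\adj M) M e i; rewrite mul_adj_mx.
  rewrite /mv; under [X in X = _ -> _]eq_bigr do rewrite mxE -mulr_natl -scalerA.
  rewrite sum_delta => ->; rewrite big1 // => j _.
  by have := HM j; rewrite /mv => ->; rewrite scaler0.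
have nqd : ~ q (\det M).
  have -> : M = \matrix_(i, j) ((i == j)%:R * t - g * (\matrix_(i, j) C i j) i j).
    by apply/matrixP => i j; rewrite !mxE.
  exact: (@det_cong _ q g t n (\matrix_(i, j) C i j) qP qg nqt).
apply: (Hy _ nqd).
have [c Hc] := Hgen y I.
move: Hc; rewrite /zero_sub => /eqP; rewrite subr_eq0 => /eqP ->.
rewrite scaler_sumr big1 // => j _.
by rewrite scalerA mulrC -scalerA Hdet scaler0.
Qed.

Theorem lemma3p3 (p : nat) (R : comNzRingType) (mR : R -> Prop) (d : nat) :
  prime p ->
  regular_local_ring mR d -> (0 < d)%N ->
  adically_complete mR ->
  finite_residue_field_char mR p ->
  forall (Q : lmodType (Lambda R)) (g : Lambda R),
    subquot_fg (@whole _ Q) (@zero_sub _ Q) ->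
    prime_ideal (principal_ideal g) ->
    pseudo_null_subquot (@whole _ Q) (ideal_mod (principal_ideal g) (@whole _ Q)) ->
    forall S : Q -> Prop, max_pseudo_null S ->
      forall x : Q,
        torsion_sub (principal_ideal g) (@whole _ Q) x <->
        torsion_sub (principal_ideal g) S x.
Proof.
move=> _ _ _ _ _ Q g Hfg _ [_ Hps] S [_ _ Smax] x; split; last first.
  by case=> _ H; split.
case=> _ Hx; split=> //.
pose T := fun y : Q => exists a, y = a *: x.
apply: (Smax T); last by exists 1; rewrite scale1r.
- split; first by exists 0; rewrite scale0r.
  + by move=> _ _ [a ->] [b ->]; exists (a + b); rewrite scalerDl.
  + by move=> c _ [a ->]; exists (c * a); rewrite scalerA.
split.
  exists [:: x]; split.
    by case=> [|[|i]] /=; [exists 1; rewrite scale1r | exists 0; rewrite scale0r..].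
  move=> _ [a ->]; exists (fun _ => a).
  by rewrite /zero_sub big_ord1 /= subrr.
move=> q qP [y [[a ->] Hy]].
apply: Hps => //.
apply: (@nak _ Q q g (a *: x)) => //.
  apply: contrapT => nqg; apply: (Hy g nqg).
  by rewrite /zero_sub scalerA mulrC -scalerA Hx ?scaler0 //; exists 1; rewrite mul1r.
Qed.
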